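(* Let $n\ge 1$ be an integer and let $x$ be a positive integer with $x\equiv 0\pmod{n!}$. Then $x+\frac{1}{n}$ is a cutoff.
   Context: For a real number $\alpha\ge 1$, define the integer sequence $(P^\alpha_i)_{i\ge 0}$ by $P^\alpha_0=0$, $P^\alpha_1=1$, and for $k\ge 1$, $P^\alpha_{k+1}=P^\alpha_k+P^\alpha_j$, where $j\ge1$ is the unique index with $\alpha P^\alpha_{j-1}<P^\alpha_k\le \alpha P^\alpha_j$. A cutoff is a real number $\alpha\ge 1$ such that for every real $\beta$ with $1\le\beta<\alpha$, the sequences $(P^\alpha_i)$ and $(P^\beta_i)$ are not identical. *)

(* Defs.v *)
From HB Require Import structures.
From mathcomp Require Import all_boot all_order all_algebra.
From mathcomp Require Import reals.
Set Implicit Arguments. Unset Strict Implicit. Unset Printing Implicit Defensive.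
Import Order.TTheory GRing.Theory Num.Theory.
Local Open Scope ring_scope.

Section PSeq.
Variable R : realType.

(* For k >= 1,
   P_{k+1} = P_k + P_j where j is the index in 1..k with
   alpha * P_{j-1} < P_k <= alpha * P_j (the paper asserts existence and
   uniqueness; we take the first such index, which is then the unique one;
   the indices j > k can never satisfy the condition since P is increasing
   and alpha * P_k >= P_k). *)
Fixpoint Pseq (alpha : R) (n : nat) : seq nat :=
  match n with
  | 0 => [:: 0%N]
  | 1 => [:: 0%N; 1%N]
  | k.+1 =>
      let s := Pseq alpha k in
      let Pk := nth 0%N s k in
      let ok (j : nat) :=
        (alpha * (nth 0%N s j.-1)%:R < Pk%:R) && (Pk%:R <= alpha * (nth 0%N s j)%:R) in
      let j := nth 0%N [seq j <- iota 1 k | ok j] 0 in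
      rcons s (Pk + nth 0%N s j)%N
  end.

Definition P (alpha : R) (i : nat) : nat := nth 0%N (Pseq alpha i) i.

Definition cutoff (alpha : R) : Prop :=
  1 <= alpha /\
  forall beta : R, 1 <= beta -> beta < alpha -> ~ (forall i, P alpha i = P beta i).

End PSeq.

(* Main.v *)
Require Import Defs.
From HB Require Import structures.
From mathcomp Require Import all_boot all_order all_algebra.
From mathcomp Require Import reals.
From mathcomp Require Import zify.
Import Order.TTheory GRing.Theory Num.Theory.
Local Open Scope ring_scope.

Set Implicit Arguments.
Unset Strict Implicit.

Section Gen.
Variable R : realType.
Implicit Types a : R.

Lemma size_Pseq a k : size (Pseq a k) = k.+1.
Proof.
elim: k => [//|[|k] IH] //=.
by rewrite size_rcons IH.
Qed.

Lemma Pseq_rcons a k : exists y, Pseq a k.+1 = rcons (Pseq a k) y.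
Proof. case: k => [|k]; first by exists 1%N. by eexists. Qed.

Lemma Pseq_prefix a k m i : (k <= m)%N -> (i <= k)%N ->
  nth 0%N (Pseq a k) i = nth 0%N (Pseq a m) i.
Proof.
move=> km ik; elim: m km => [|m IH]; first by rewrite leqn0 => /eqP->.
rewrite leq_eqVlt => /orP[/eqP->//|km].
have [y ->] := Pseq_rcons a m.
rewrite nth_rcons size_Pseq.
have -> : (i < m.+1)%N by apply: leq_ltn_trans km.
exact: IH.
Qed.

Lemma PseqE a k i : (i <= k)%N -> nth 0%N (Pseq a k) i = P a i.
Proof. move=> ik; rewrite /P; apply/esym/Pseq_prefix => //. Qed.

Definition okP a k j :=
  (a * (P a j.-1)%:R < (P a k)%:R) && ((P a k)%:R <= a * (P a j)%:R).

Definition jsel a k := nth 0%N [seq j <- iota 1 k | okP a k j] 0.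

Lemma PseqS a k : Pseq a k.+2 =
  let s := Pseq a k.+1 in
  let Pk := nth 0%N s k.+1 in
  let ok (j : nat) :=
    (a * (nth 0%N s j.-1)%:R < Pk%:R) && (Pk%:R <= a * (nth 0%N s j)%:R) in
  let j := nth 0%N [seq j <- iota 1 k.+1 | ok j] 0 in
  rcons s (Pk + nth 0%N s j)%N.
Proof. by []. Qed.

Lemma P_rec a k : (0 < k)%N -> P a k.+1 = (P a k + P a (jsel a k))%N.
Proof.
case: k => [//|k] _.
rewrite {1}/P PseqS; cbv zeta.
set s := Pseq a k.+1.
rewrite nth_rcons size_Pseq ltnn eqxx.
have -> : [seq j <- iota 1 k.+1 | (a * (nth 0%N s j.-1)%:R < (nth 0%N s k.+1)%:R)
      && ((nth 0%N s k.+1)%:R <= a * (nth 0%N s j)%:R)] =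
      [seq j <- iota 1 k.+1 | okP a k.+1 j].
  apply: eq_in_filter => j; rewrite mem_iota => /andP[j1 jk].
  by rewrite /okP /s !PseqE //; lia.
rewrite /s PseqE //.
rewrite /jsel.
congr (_ + _)%N.
apply: PseqE.
set l := [seq _ <- _ | _].
case: (ltnP 0 (size l)) => hl.
  have := mem_nth 0%N hl; rewrite mem_filter mem_iota => /andP[_ /andP[_]].
  by rewrite add1n ltnS.
by rewrite nth_default.
Qed.

Lemma P0 a : P a 0 = 0%N. Proof. by []. Qed.
Lemma P1 a : P a 1 = 1%N. Proof. by []. Qed.

Lemma jsel_spec a (k : nat) : 1 <= a -> (0 < P a k)%N ->
  (1 <= jsel a k <= k)%N /\ okP a k (jsel a k).
Proof.
move=> ha hk.
have k0 : (0 < k)%N by case: k hk.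
have ex : exists j, (0 < j)%N && ((P a k)%:R <= a * (P a j)%:R).
  exists k; rewrite k0 /=.
  rewrite -[X in X <= _]mul1r ler_pM2r // ltr0n //.
have hh : has (okP a k) (iota 1 k).
  case: (ex_minnP ex) => j /andP[j0 hj] hmin.
  apply/hasP; exists j.
    rewrite mem_iota add1n ltnS j0 /=.
    have := hmin k; rewrite k0 /= => H; apply: H.
    rewrite -[X in X <= _]mul1r ler_pM2r // ltr0n //.
  rewrite /okP hj andbT.
  case: j j0 hj hmin => [//|[|j]] _ hj hmin.
    by rewrite /= P0 mulr0 ltr0n.
  rewrite /= ltNge; apply/negP => H.
  by have := hmin j.+1; rewrite H /= => /(_ isT); rewrite ltnn.
rewrite /jsel; set l := filter _ _.
have hl : (0 < size l)%N by rewrite size_filter -has_count.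
have := mem_nth 0%N hl; rewrite mem_filter mem_iota add1n ltnS.
by move=> /andP[-> ->].
Qed.

Lemma Ppos a k : 1 <= a -> (0 < k)%N -> (0 < P a k)%N.
Proof.
move=> ha; elim: k => [//|[|k] IH _] //.
by rewrite P_rec // addn_gt0 IH.
Qed.

Lemma P_ltS a k : 1 <= a -> (P a k < P a k.+1)%N.
Proof.
move=> ha; case: k => [|k]; first by [].
have [/andP[j1 _] _] := @jsel_spec a k.+1 ha (@Ppos a k.+1 ha (ltn0Sn k)).
rewrite (@P_rec a k.+1 isT); have := @Ppos a (jsel a k.+1) ha j1; lia.
Qed.

Lemma P_lt a i j : 1 <= a -> (i < j)%N -> (P a i < P a j)%N.
Proof.
move=> ha; elim: j => [//|j IH]; rewrite ltnS leq_eqVlt => /orP[/eqP->|h].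
  exact: P_ltS.
exact: ltn_trans (IH h) (@P_ltS a j ha).
Qed.

Lemma P_leE a i j : 1 <= a -> (P a i <= P a j)%N = (i <= j)%N.
Proof. move=> ha; apply: leq_mono => m n; exact: P_lt. Qed.

Lemma P_ltE a i j : 1 <= a -> (P a i < P a j)%N = (i < j)%N.
Proof. by move=> ha; rewrite !ltnNge P_leE. Qed.

Lemma P_ge a k : 1 <= a -> (k <= P a k)%N.
Proof.
move=> ha; elim: k => [//|k IH]; exact: leq_ltn_trans IH (@P_ltS a k ha).
Qed.

End Gen.

Local Close Scope ring_scope.

Lemma arith1 (x j0 v : nat) : (1 <= j0)%N -> (1 <= v)%N -> (v %% j0 = 1 %% j0)%N ->
  (v <= x * j0)%N -> (v + j0 <= x * j0 + 1)%N.
Proof.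
move=> j1 v1 hm hv.
have : j0 %| v - 1 by rewrite -eqn_mod_dvd // hm.
case/dvdnP=> q hq.
have qx : (q < x)%N by rewrite -(ltn_pmul2r j1); lia.
have : (q.+1 * j0 <= x * j0)%N by rewrite leq_mul2r qx orbT.
lia.
Qed.

Section Main.
Variable R : realType.
Variables n x N : nat.
Hypothesis n1 : (1 <= n)%N.
Hypothesis x0 : (0 < x)%N.
Hypothesis hN : N = (n * x + 1)%N.
Hypothesis hdx : forall d, (1 <= d <= n)%N -> d %| x.

Let alpha : R := (N%:R / n%:R)%R.

Lemma nx : (n <= x)%N.
Proof. apply: dvdn_leq => //; apply: hdx; by rewrite n1 leqnn. Qed.

Lemma alpha_mul m : (alpha * m%:R = (N * m)%:R / n%:R)%R.
Proof. by rewrite /alpha natrM mulrAC. Qed.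

Lemma n_gt0 : (0 < n%:R :> R)%R.
Proof. by rewrite ltr0n. Qed.

Lemma ltA m v : (alpha * m%:R < v%:R)%R = (N * m < n * v)%N.
Proof. by rewrite alpha_mul ltr_pdivrMr ?n_gt0 // -natrM ltr_nat [(v * n)%N]mulnC. Qed.

Lemma leA m v : (v%:R <= alpha * m%:R)%R = (n * v <= N * m)%N.
Proof. by rewrite alpha_mul ler_pdivlMr ?n_gt0 // -natrM ler_nat [(v * n)%N]mulnC. Qed.

Lemma alpha1 : (1 <= alpha)%R.
Proof.
rewrite /alpha ler_pdivlMr ?n_gt0 // mul1r ler_nat hN.
have := nx; nia.
Qed.

Notation Q := (P alpha).

Lemma specA k : (0 < k)%N ->
  let j := jsel alpha k in
  [/\ (1 <= j <= k)%N, (N * Q j.-1 < n * Q k)%N, (n * Q k <= N * Q j)%N &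
     Q k.+1 = (Q k + Q j)%N].
Proof.
move=> k0 j.
have [hj /andP[h1 h2]] := jsel_spec alpha1 (Ppos alpha1 k0).
split => //; last exact: P_rec.
  by rewrite -ltA.
by rewrite -leA.
Qed.

Lemma Pid i : (i <= n)%N -> Q i = i.
Proof.
elim: i => [//|[|i] IH hi] //.
have := specA (ltn0Sn i) => -[/andP[j1 _] f1 _ ->].
rewrite IH ?(ltnW hi) //.
case: (jsel alpha i.+1) j1 f1 => [//|[|j]] _ f1; first by rewrite P1 addn1.
exfalso.
have p1 := @Ppos R alpha j.+1 alpha1 (ltn0Sn j).
rewrite IH ?(ltnW hi) // in f1.
have : (N <= N * Q j.+1)%N by rewrite leq_pmulr.
have := nx.
have : (n * i.+1 <= n * x)%N by rewrite leq_mul2l; apply/orP; right; have := nx; lia.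
simpl in f1.
lia.
Qed.

Lemma Inv k j : (1 <= j <= n)%N -> (N * (j - 1) < n * Q k)%N ->
  (n * Q k <= N * j)%N -> Q k %% j = 1 %% j.
Proof.
elim: k j => [|[|k] IH] j hj h1 h2.
- by rewrite P0 muln0 in h1.
- by rewrite P1.
have := specA (ltn0Sn k) => -[/andP[j01 j0k] f1 f2 Hrec].
set j0 := jsel alpha k.+1 in j01 j0k f1 f2 Hrec.
set v := Q k.+1 in f1 f2 Hrec IH.
rewrite Hrec in h1 h2 *.
have Nx := nx.
have j0n : (j0 <= n)%N.
  rewrite leqNgt; apply/negP => hn.
  have : (n <= Q j0.-1)%N by rewrite -{1}(Pid (leqnn n)) P_leE ?alpha1 //; lia.
  move=> hh; have : (N * n <= N * Q j0.-1)%N by rewrite leq_mul2l hh orbT.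
  have : (N * j <= N * n)%N by rewrite leq_mul2l; apply/orP; right; lia.
  have : (0 < Q j0)%N by apply: Ppos; [exact: alpha1|lia].
  rewrite mulnDr in h2.
  nia.
rewrite (Pid j0n) in h1 h2 f2 *.
rewrite Pid in f1; last by lia.
have iv := IH j0 ltac:(lia) ltac:(by rewrite subn1) f2.
rewrite mulnDr in h1 h2.
have jj0 : (j0 <= j)%N.
  rewrite leqNgt; apply/negP => hlt.
  have : (N * j <= N * j0.-1)%N by rewrite leq_mul2l; apply/orP; right; lia.
  lia.
have jj1 : (j <= j0.+1)%N.
  rewrite leqNgt; apply/negP => hlt.
  have : (N * j0.+1 <= N * (j - 1))%N by rewrite leq_mul2l; apply/orP; right; lia.
  have : (n * j0 <= n * x)%N by rewrite leq_mul2l; apply/orP; right; lia.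
  rewrite mulnSr; lia.
case: (ltngtP j0 j) jj0 => [hj0|//|<-] _; last by rewrite modnDr.
have ej : j = j0.+1 by lia.
subst j.
have eN : (N * j0 = n * (x * j0) + j0)%N by rewrite hN mulnDl mul1n mulnA.
have vle : (v <= x * j0)%N.
  rewrite -ltnS -(ltn_pmul2l (m:=n)) //; rewrite eN in f2; lia.
have v1 : (1 <= v)%N by apply: Ppos; [exact: alpha1|].
have a1 := arith1 j01 v1 iv vle.
have a2 : (x * j0 < v + j0)%N.
  rewrite -(ltn_pmul2l (m:=n)) // mulnDr; rewrite subn1 /= eN in h1; lia.
have -> : (v + j0 = x * j0 + 1)%N by lia.
have /dvdnP[q ->] : j0.+1 %| x by apply: hdx; lia.
by rewrite -mulnA mulnC -mulnA mulnC modnMDl.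
Qed.

Lemma ltA2 m v : (v%:R < alpha * m%:R)%R = (n * v < N * m)%N.
Proof. by rewrite alpha_mul ltr_pdivlMr ?n_gt0 // -natrM ltr_nat [(v * n)%N]mulnC. Qed.

Lemma exists_k0 : exists k, (0 < k)%N /\ Q k = N.
Proof.
have ex : exists k, (N <= Q k)%N by exists N; apply: P_ge alpha1.
case: (ex_minnP ex) => k hk hmin.
have N2 : (2 <= N)%N by rewrite hN; nia.
case: k hk hmin => [|[|k]] hk hmin.
- by rewrite P0 in hk; lia.
- by rewrite P1 in hk; lia.
exists k.+2; split=> //.
have hlt : (Q k.+1 < N)%N.
  by rewrite ltnNge; apply/negP => h; have := hmin _ h; lia.
have := specA (ltn0Sn k) => -[/andP[j01 j0k] f1 f2 Hrec].
set j0 := jsel alpha k.+1 in j01 j0k f1 f2 Hrec.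
set v := Q k.+1 in f1 f2 Hrec hlt.
have Nx := nx.
have j0n : (j0 <= n)%N.
  rewrite leqNgt; apply/negP => hn.
  have : (n <= Q j0.-1)%N by rewrite -{1}(Pid (leqnn n)) P_leE ?alpha1 //; lia.
  move=> hh; have : (N * n <= N * Q j0.-1)%N by rewrite leq_mul2l hh orbT.
  have : (n * v < n * N)%N by rewrite ltn_pmul2l.
  nia.
rewrite (Pid j0n) in f2 Hrec.
rewrite Pid in f1; last by lia.
have iv := @Inv k.+1 j0 ltac:(lia) ltac:(by rewrite subn1) f2.
have eN : (N * j0 = n * (x * j0) + j0)%N by rewrite hN mulnDl mul1n mulnA.
have vle : (v <= x * j0)%N.
  case: (ltngtP j0 n) j0n => [hj0|//|ej0] _.
    rewrite -ltnS -(ltn_pmul2l (m:=n)) //; rewrite eN in f2; lia.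
  rewrite ej0; lia.
have v1 : (1 <= v)%N by apply: Ppos; [exact: alpha1|].
have a1 := arith1 j01 v1 iv vle.
have : (x * j0 <= x * n)%N by rewrite leq_mul2l j0n orbT.
lia.
Qed.

Lemma main_cut (beta : R) : (1 <= beta)%R -> (beta < alpha)%R ->
  ~ (forall i, Q i = P beta i).
Proof.
move=> b1 ba Heq.
have [k0 [k00 hk0]] := exists_k0.
have := specA k00 => -[/andP[j1 jk] f1 f2 Hrec].
set j := jsel alpha k0 in j1 jk f1 f2 Hrec.
rewrite hk0 in f1 f2 Hrec.
have Nx := nx.
have N1 : (0 < N)%N by rewrite hN addn1.
have hbpos : (0 < P beta k0)%N by rewrite -Heq hk0.
have [/andP[j1' jk'] /andP[_ g2]] := jsel_spec b1 hbpos.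
set j' := jsel beta k0 in j1' jk' g2.
rewrite -!Heq hk0 in g2.
have qpos : (0 < Q j')%N by apply: Ppos; [exact: alpha1|].
have g3 : (N%:R < alpha * (Q j')%:R :> R)%R.
  apply: le_lt_trans g2 _; rewrite ltr_pM2r // ltr0n //.
rewrite ltA2 [(n * N)%N]mulnC ltn_pmul2l // in g3.
have Hb := P_rec beta k00.
rewrite -!Heq hk0 Hrec in Hb.
have ejj : Q j = Q j' by rewrite /j'; lia.
have : (Q j.-1 < n)%N.
  by rewrite -(ltn_pmul2l N1) [(N * n)%N]mulnC.
rewrite -{1}(Pid (leqnn n)) P_ltE ?alpha1 // => h1.
have : (n < j)%N by rewrite -(P_ltE n j alpha1) Pid // ejj.
lia.
Qed.

Lemma cut_alpha : cutoff alpha.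
Proof. split; first exact: alpha1. exact: main_cut. Qed.

End Main.

Local Open Scope ring_scope.

Theorem mainTheorem11 (R : realType) (n x : nat) :
  (1 <= n)%N -> (0 < x)%N -> x = 0 %[mod n`!] ->
  cutoff ((x%:R : R) + (n%:R)^-1).
Proof.
move=> n1 x0 hx.
have hdx : forall d, (1 <= d <= n)%N -> (d %| x)%N.
  move=> d hd; apply: dvdn_trans (dvdn_fact hd) _.
  by rewrite /dvdn hx mod0n.
have -> : (x%:R : R) + (n%:R)^-1 = ((n * x + 1)%N%:R / n%:R).
  rewrite natrD natrM mulrDl mulrAC divff ?mul1r ?mul1r //.
  by rewrite pnatr_eq0 -lt0n.
exact: (@cut_alpha R n x (n * x + 1)%N n1 x0 erefl hdx).
Qed.
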